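(* Let $a$ and $b$ be disjoint finite groups of labeled samples with $n_1^a,n_0^a,n_1^b,n_0^b\ge 1$, and let the within-group orderings $\mathrm{p}^a$ and $\mathrm{p}^b$ be fixed. Then: (i) there exists a cross-group ordering $o$ with $$\Delta\mathrm{xAUC}(o)\le \min\Big(\max\big(\tfrac{1}{n_1^b},\tfrac{1}{n_0^b}\big),\ \max\big(\tfrac{1}{n_1^a},\tfrac{1}{n_0^a}\big)\Big);$$ (ii) there exists a cross-group ordering $o'$ with $$\Delta\mathrm{PRF}(o')\le \min\Big(\max\big(\tfrac{n_0^b}{n_1^a n_0},\tfrac{1}{n_0}\big),\ \max\big(\tfrac{n_0^a}{n_1^b n_0},\tfrac{1}{n_0}\big)\Big).$$
   Context: Setting: two disjoint finite groups $a$, $b$ of samples; each sample $u$ has a label $Y_u\in\{0,1\}$. Let $n^a,n^b$ be the group sizes, $n_1^a,n_0^a$ the numbers of label-1 and label-0 samples in $a$ (similarly $n_1^b,n_0^b$), $n_1=n_1^a+n_1^b$, $n_0=n_0^a+n_0^b$. Fixed within-group rankings are given: $\mathrm{p}^a=(\mathrm{p}^{a(1)},\dots,\mathrm{p}^{a(n^a)})$ lists all samples of $a$, and $\mathrm{p}^b=(\mathrm{p}^{b(1)},\dots,\mathrm{p}^{b(n^b)})$ lists all samples of $b$. A cross-group ordering $o$ is a ranked list (strict total order, top to bottom) of all samples of $a\cup b$ whose restriction to $a$ is $\mathrm{p}^a$ and whose restriction to $b$ is $\mathrm{p}^b$. Write $u\succ_o v$ if $u$ is ranked above $v$ in $o$.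 Define $\mathrm{xAUC}_o(a,b)=\frac{1}{n_1^a n_0^b}\#\{(u,v):u\in a,Y_u=1,v\in b,Y_v=0,u\succ_o v\}$, and $\mathrm{xAUC}_o(b,a)$ symmetrically (positives of $b$ over negatives of $a$, normalized by $n_1^b n_0^a$); $\Delta\mathrm{xAUC}(o)=|\mathrm{xAUC}_o(a,b)-\mathrm{xAUC}_o(b,a)|$. $\mathrm{PRF}_o(a)=\frac{1}{n_1^a n_0}\#\{(u,v):u\in a,Y_u=1,Y_v=0\ (v\in a\cup b),u\succ_o v\}$, $\mathrm{PRF}_o(b)$ symmetrically (normalized by $n_1^b n_0$), and $\Delta\mathrm{PRF}(o)=|\mathrm{PRF}_o(a)-\mathrm{PRF}_o(b)|$. *)

(* Defs.v *)
From mathcomp Require Import all_boot all_order all_algebra.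
Set Implicit Arguments. Unset Strict Implicit. Unset Printing Implicit Defensive.
Import Order.TTheory GRing.Theory Num.Theory.
Local Open Scope ring_scope.

(* Samples are elements of a finite type T; groups are disjoint sets A, B;
   labels are given by Y : T -> bool (true = label 1).
   Rankings are sequences listed top to bottom. *)
Section Defs.
Variable T : finType.

Definition npos (Y : T -> bool) (S : {set T}) : nat := #|[set u in S | Y u]|.
Definition nneg (Y : T -> bool) (S : {set T}) : nat := #|[set u in S | ~~ Y u]|.

Definition ranking_of (S : {set T}) (p : seq T) : Prop :=
  uniq p /\ (forall x, (x \in p) = (x \in S)).

Definition cross_ordering (A B : {set T}) (pa pb o : seq T) : Prop :=
  [/\ uniq o, (forall x, (x \in o) = (x \in A :|: B)),
      [seq x <- o | x \in A] = pa & [seq x <- o | x \in B] = pb].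

Definition above (o : seq T) (u v : T) : bool := (index u o < index v o)%N.

Definition xAUC (Y : T -> bool) (o : seq T) (A B : {set T}) : rat :=
  (#|[set p : T * T | [&& p.1 \in A, Y p.1, p.2 \in B, ~~ Y p.2 & above o p.1 p.2]]|)%:R
  / ((npos Y A * nneg Y B)%N)%:R.

Definition DxAUC (Y : T -> bool) (o : seq T) (A B : {set T}) : rat :=
  `|xAUC Y o A B - xAUC Y o B A|.

(* PRF_o(A) with respect to the pair of groups (A,B): positives of A ranked
   above negatives of A u B, normalized by n_1^A * n_0, n_0 = n_0^A + n_0^B *)
Definition PRF (Y : T -> bool) (o : seq T) (A B : {set T}) : rat :=
  (#|[set p : T * T | [&& p.1 \in A, Y p.1, p.2 \in A :|: B, ~~ Y p.2 & above o p.1 p.2]]|)%:R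
  / ((npos Y A * (nneg Y A + nneg Y B))%N)%:R.

Definition DPRF (Y : T -> bool) (o : seq T) (A B : {set T}) : rat :=
  `|PRF Y o A B - PRF Y o B A|.
End Defs.

(* Main.v *)
Require Import Defs.
From mathcomp Require Import all_boot all_order all_algebra.
From mathcomp Require Import ring lra zify.
Import Order.TTheory GRing.Theory Num.Theory.
Local Open Scope ring_scope.

Lemma sign_change (g : nat -> rat) (n : nat) :
  (0 < n)%N -> 0 <= g 0%N -> g n <= 0 ->
  exists i, (i < n)%N /\ 0 <= g i /\ g i.+1 <= 0.
Proof.
elim: n => [//|n IH] _ g0 gn.
case: (leP 0 (g n)) => h.
  by exists n; split.
case: n IH gn h => [|n] IH gn h; first by move: (lt_le_trans h g0); rewrite ltxx.
have [i [Hi [H1 H2]]] := IH isT g0 (ltW h).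
by exists i; split => //; apply: ltnW.
Qed.

Lemma above_swap (T : finType) (L R : seq T) (x y u v : T) :
  ~~ ((u == x) && (v == y)) -> ~~ ((u == y) && (v == x)) ->
  above (L ++ x :: y :: R) u v = above (L ++ y :: x :: R) u v.
Proof.
rewrite /above !index_cat /= (eq_sym x u) (eq_sym y u) (eq_sym x v) (eq_sym y v).
move: (index_mem u L) (index_mem v L).
case: (u \in L); case: (v \in L) => /= Hu Hv;
case: (u == x); case: (u == y); case: (v == x); case: (v == y) => //= *; lia.
Qed.

Lemma card_swap (T : finType) (F G : pred T) (a b : T) :
  (forall p, p != a -> p != b -> F p = G p) ->
  (#|[set p | F p]| <= #|[set p | G p]| + (F a + F b))%N.
Proof.
move=> FG.
rewrite (cardD1 a [set p | F p]) (cardD1 b [predD1 [set p | F p] & a]) !inE.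
have -> : #|[predD1 [predD1 [set p | F p] & a] & b]| = #|[pred p | G p & (p != a) && (p != b)]|.
  apply: eq_card => p; rewrite !inE.
  case Ea: (p != a); case Eb: (p != b); rewrite /= ?andbF ?andbT //.
  by rewrite FG.
have : (#|[pred p | G p & (p != a) && (p != b)]| <= #|[set p | G p]|)%N.
  by apply: subset_leq_card; apply/subsetP => p; rewrite !inE => /andP[].
have : ((b != a) && F b <= F b)%N by case: (b != a); case: (F b).
lia.
Qed.
Definition Oq (T : finType) (pa pb : seq T) (q k : nat) : seq T :=
  take q pb ++ take k pa ++ take 1 (drop q pb) ++ drop k pa ++ drop 1 (drop q pb).

Arguments Oq {T}.

Lemma Oq_cross (T : finType) (A B : {set T}) pa pb q k :
  [disjoint A & B] -> ranking_of A pa -> ranking_of B pb ->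
  cross_ordering A B pa pb (Oq pa pb q k).
Proof.
move=> dAB [ua ma] [ub mb].
have dis : forall x, x \in A -> x \in B -> False.
  by move=> x xA xB; move/disjoint_setI0: dAB => /setP/(_ x); rewrite !inE xA xB.
have perm : perm_eq (Oq pa pb q k) (pa ++ pb).
  apply/permP => p; rewrite /Oq.
  have ea : (count p pa = count p (take k pa) + count p (drop k pa))%N.
    by rewrite -count_cat cat_take_drop.
  have eb : (count p pb = count p (take q pb) + count p (take 1 (drop q pb))
                         + count p (drop 1 (drop q pb)))%N.
    by rewrite -!count_cat -catA cat_take_drop cat_take_drop.
  rewrite !count_cat ea eb; lia.
have fA : forall s, {subset s <= pb} -> [seq x <- s | x \in A] = [::].
  move=> s sub; rewrite -[RHS](filter_pred0 s); apply: eq_in_filter => x /sub.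
  rewrite mb /= => xB; apply/negP => xA; exact: (dis x).
have fB : forall s, {subset s <= pa} -> [seq x <- s | x \in B] = [::].
  move=> s sub; rewrite -[RHS](filter_pred0 s); apply: eq_in_filter => x /sub.
  rewrite ma /= => xA; apply/negP => xB; exact: (dis x).
have subt : forall (s : seq T) n, {subset take n s <= s} by move=> s n x /mem_take.
have subd : forall (s : seq T) n, {subset drop n s <= s} by move=> s n x /mem_drop.
have subdd : forall (s : seq T) n m, {subset take n (drop m s) <= s}.
  by move=> s n m x /mem_take /mem_drop.
have subdd' : forall (s : seq T) n m, {subset drop n (drop m s) <= s}.
  by move=> s n m x /mem_drop /mem_drop.
split.
- by rewrite (perm_uniq perm) cat_uniq ua ub andbT /=; apply/hasPn => x; rewrite mb ma => xB; apply/negP => xA; exact: (dis x).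
- by move=> x; rewrite (perm_mem perm) mem_cat ma mb inE.
- rewrite /Oq !filter_cat (fA _ (subt _ _)) (fA _ (subdd _ _ _)) (fA _ (subdd' _ _ _)) /=.
  rewrite cats0 -filter_cat cat_take_drop.
  rewrite -[RHS](filter_predT pa); apply: eq_in_filter => x; by rewrite ma => ->.
- rewrite /Oq !filter_cat (fB _ (subt _ _)) (fB _ (subd _ _)) /=.
  rewrite -!filter_cat cat_take_drop cat_take_drop.
  by rewrite -[RHS](filter_predT pb); apply: eq_in_filter => x; rewrite mb.
Qed.

Lemma Oq_na (T : finType) (pa pb : seq T) q :
  Oq pa pb q (size pa) = take q pb ++ pa ++ drop q pb.
Proof. by rewrite /Oq take_size drop_size /= cat_take_drop. Qed.

Lemma Oq_0 (T : finType) (pa pb : seq T) q :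
  Oq pa pb q 0 = take q.+1 pb ++ pa ++ drop q.+1 pb.
Proof.
by rewrite /Oq take0 drop0 /= -[q.+1]addn1 takeD addnC -drop_drop -catA.
Qed.

Lemma Oq_swap (T : finType) (pa pb : seq T) q k :
  (k < size pa)%N -> (q < size pb)%N ->
  exists L R x y, [/\ x \in pa, y \in pb, Oq pa pb q k.+1 = L ++ x :: y :: R
                   & Oq pa pb q k = L ++ y :: x :: R].
Proof.
move=> hk hq.
rewrite /Oq -[k.+1]addn1 takeD addnC -drop_drop.
case E1: (drop k pa) => [|x ra]; first by have := size_drop k pa; rewrite E1 /=; lia.
case E2: (drop q pb) => [|y rb]; first by have := size_drop q pb; rewrite E2 /=; lia.
have mx : x \in pa by rewrite -(cat_take_drop k pa) E1 mem_cat inE eqxx orbT.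
have my : y \in pb by rewrite -(cat_take_drop q pb) E2 mem_cat inE eqxx orbT.
rewrite /=.
exists (take q pb ++ take k pa), (ra ++ rb), x, y; split.
- by [].
- by [].
- by rewrite /= !take0 !drop0 /= -!catA.
- by rewrite /= !take0 !drop0 /= -!catA.
Qed.

Lemma main_gen (T : finType) (A B : {set T}) (pa pb : seq T) (g : seq T -> rat) (s : rat) :
  [disjoint A & B] -> ranking_of A pa -> ranking_of B pb ->
  (0 < size pa)%N -> (0 < size pb)%N ->
  0 <= g (pa ++ pb) -> g (pb ++ pa) <= 0 ->
  (forall L R x y, x \in A -> y \in B -> g (L ++ x :: y :: R) - g (L ++ y :: x :: R) <= s) ->
  exists o, cross_ordering A B pa pb o /\ `|g o| <= s.
Proof.
move=> dAB ra rb na nb g0 g1 step.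
have := sign_change (fun q => g (Oq pa pb q (size pa))) (size pb) nb.
rewrite /= !Oq_na take0 drop0 take_size drop_size cats0 => /(_ g0 g1) [q [hq [Gq Gq1]]].
have := sign_change (fun m => g (Oq pa pb q (size pa - m))) (size pa) na.
rewrite /= subn0 subnn Oq_0 -!Oq_na => /(_ Gq Gq1) [m [hm [Hm Hm1]]].
move: Hm Hm1 => /=.
have -> : (size pa - m = (size pa - m.+1).+1)%N by lia.
have hk : (size pa - m.+1 < size pa)%N by lia.
have [L [R [x [y [mx my E1 E2]]]]] := @Oq_swap _ pa pb q _ hk hq.
move=> H1 H2.
exists (Oq pa pb q (size pa - m.+1).+1); split; first exact: Oq_cross.
case: ra rb => [_ ma] [_ mb].
have := step L R x y; rewrite -ma -mb mx my -E1 -E2 => /(_ isT isT) hs.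
rewrite ger0_norm //; lra.
Qed.

Lemma cnt_swap (T : finType) (P1 P2 P3 P4 : T -> bool) L R x y :
  let F o := [set p : T * T | [&& P1 p.1, P2 p.1, P3 p.2, P4 p.2 & above o p.1 p.2]] in
  (#|F (L ++ x :: y :: R)| <= #|F (L ++ y :: x :: R)| +
     ([&& P1 x, P2 x, P3 y & P4 y] + [&& P1 y, P2 y, P3 x & P4 x]))%N /\
  (#|F (L ++ y :: x :: R)| <= #|F (L ++ x :: y :: R)| +
     ([&& P1 x, P2 x, P3 y & P4 y] + [&& P1 y, P2 y, P3 x & P4 x]))%N.
Proof.
move=> F.
have key : forall o1 o2, (forall u v, ~~((u == x) && (v == y)) -> ~~((u == y) && (v == x)) ->
    above o1 u v = above o2 u v) ->
  (#|F o1| <= #|F o2| +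
     ([&& P1 x, P2 x, P3 y & P4 y] + [&& P1 y, P2 y, P3 x & P4 x]))%N.
  move=> o1 o2 H.
  apply: leq_trans (@card_swap _
     (fun p => [&& P1 p.1, P2 p.1, P3 p.2, P4 p.2 & above o1 p.1 p.2])
     (fun p => [&& P1 p.1, P2 p.1, P3 p.2, P4 p.2 & above o2 p.1 p.2]) (x, y) (y, x) _) _.
  + move=> [u v] /= h1 h2; rewrite H //; by rewrite -xpair_eqE.
  + rewrite leq_add2l /=; apply: leq_add;
    by case: (P1 _); case: (P2 _); case: (P3 _); case: (P4 _); case: above.
split; apply: key => u v h1 h2; first exact: above_swap.
by apply: esym; apply: above_swap.
Qed.

Lemma step_rat (c1h c1l c2h c2l D1 D2 : nat) (e1 e2 : bool) (s : rat) :
  (0 < D1)%N -> (0 < D2)%N -> (c1h <= c1l + e1)%N -> (c2l <= c2h + e2)%N ->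
  ~~ (e1 && e2) -> 0 <= s -> 1 / D1%:R <= s -> 1 / D2%:R <= s ->
  (c1h%:R / D1%:R - c2h%:R / D2%:R) - (c1l%:R / D1%:R - c2l%:R / D2%:R) <= s.
Proof.
move=> hD1 hD2 h1 h2 he hs s1 s2.
have k1 : c1h%:R / D1%:R <= c1l%:R / D1%:R + (e1 : nat)%:R / D1%:R :> rat.
  rewrite -mulrDl -natrD; apply: ler_wpM2r; first by rewrite invr_ge0 ler0n.
  by rewrite ler_nat.
have k2 : c2l%:R / D2%:R <= c2h%:R / D2%:R + (e2 : nat)%:R / D2%:R :> rat.
  rewrite -mulrDl -natrD; apply: ler_wpM2r; first by rewrite invr_ge0 ler0n.
  by rewrite ler_nat.
move: he k1 k2 h1 h2; case: e1; case: e2 => //= _; rewrite ?mul0r => k1 k2 _ _; lra.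
Qed.

Lemma above_out (T : finType) (s1 s2 : seq T) u v :
  v \in s1 -> u \notin s1 -> above (s1 ++ s2) u v = false.
Proof.
move=> hv hu; rewrite /above !index_cat hv (negbTE hu).
have := index_mem v s1; rewrite hv; lia.
Qed.

Lemma above_in (T : finType) (s1 s2 : seq T) u v :
  u \in s1 -> v \notin s1 -> above (s1 ++ s2) u v.
Proof.
move=> hu hv; rewrite /above !index_cat hu (negbTE hv).
have := index_mem u s1; rewrite hu; lia.
Qed.

Lemma inv_le1 (a b : nat) : (0 < a)%N -> (0 < b)%N -> 1 / (a * b)%:R <= 1 / b%:R :> rat.
Proof.
move=> ha hb; rewrite !div1r lef_pV2 ?posrE ?ltr0n ?muln_gt0 ?ha ?hb //.
by rewrite ler_nat leq_pmull.
Qed.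

Lemma inv_le2 (a b : nat) : (0 < a)%N -> (0 < b)%N -> 1 / (a * b)%:R <= 1 / a%:R :> rat.
Proof. by move=> ha hb; rewrite mulnC inv_le1. Qed.

Lemma prf_end (cA cB a b a0 b0 : nat) : (0 < a)%N -> (0 < b)%N -> (0 < a0 + b0)%N ->
  (a * b0 <= cA)%N -> (cB <= b * b0)%N ->
  cB%:R / (b * (b0 + a0))%:R <= cA%:R / (a * (a0 + b0))%:R :> rat.
Proof.
move=> ha hb hn h1 h2.
apply: (@le_trans _ _ ((b * b0)%:R / (b * (b0 + a0))%:R)).
  by apply: ler_wpM2r; rewrite ?invr_ge0 ?ler0n ?ler_nat.
have -> : (b * b0)%:R / (b * (b0 + a0))%:R = (a * b0)%:R / (a * (a0 + b0))%:R :> rat.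
  have ha' : a%:R != 0 :> rat by rewrite pnatr_eq0 -lt0n.
  have hb' : b%:R != 0 :> rat by rewrite pnatr_eq0 -lt0n.
  have hn' : (a0%:R + b0%:R) != 0 :> rat by rewrite -natrD pnatr_eq0 -lt0n.
  have hn'' : (b0%:R + a0%:R) != 0 :> rat by rewrite addrC.
  rewrite !natrM !natrD; field; rewrite ?ha' ?hb' ?hn' ?hn'' //.
by apply: ler_wpM2r; rewrite ?invr_ge0 ?ler0n ?ler_nat.
Qed.

Lemma inv_le3 (a n c : nat) : (0 < c)%N ->
  1 / (a * n)%:R <= c%:R / (a%:R * n%:R) :> rat.
Proof.
move=> hc; rewrite -natrM; apply: ler_wpM2r; first by rewrite invr_ge0 ler0n.
by rewrite ler1n.
Qed.

Theorem proposition1 (T : finType) (A B : {set T}) (Y : T -> bool)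
    (pa pb : seq T) :
  [disjoint A & B] ->
  (1 <= npos Y A)%N -> (1 <= nneg Y A)%N ->
  (1 <= npos Y B)%N -> (1 <= nneg Y B)%N ->
  ranking_of A pa -> ranking_of B pb ->
  (exists o : seq T, cross_ordering A B pa pb o /\
     DxAUC Y o A B <=
       Num.min (Num.max (1 / (npos Y B)%:R) (1 / (nneg Y B)%:R))
               (Num.max (1 / (npos Y A)%:R) (1 / (nneg Y A)%:R)))
  /\
  (exists o' : seq T, cross_ordering A B pa pb o' /\
     DPRF Y o' A B <=
       Num.min
         (Num.max ((nneg Y B)%:R / ((npos Y A)%:R * (nneg Y A + nneg Y B)%:R))
                  (1 / (nneg Y A + nneg Y B)%:R))
         (Num.max ((nneg Y A)%:R / ((npos Y B)%:R * (nneg Y A + nneg Y B)%:R))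
                  (1 / (nneg Y A + nneg Y B)%:R))).
Proof.
move=> dAB hpa hna hpb hnb ra rb.
have dis : forall x, x \in A -> x \in B -> False.
  by move=> x xA xB; move/disjoint_setI0: dAB => /setP/(_ x); rewrite !inE xA xB.
have [ua ma] := ra; have [ub mb] := rb.
have spa : (0 < size pa)%N.
  move: hpa; rewrite /npos => /card_gt0P [u]; rewrite inE => /andP [uA _].
  by rewrite lt0n size_eq0; apply/eqP => E; move: uA; rewrite -ma E.
have spb : (0 < size pb)%N.
  move: hpb; rewrite /npos => /card_gt0P [u]; rewrite inE => /andP [uB _].
  by rewrite lt0n size_eq0; apply/eqP => E; move: uB; rewrite -mb E.
have notB : forall x, x \in A -> (x \in B) = false.
  by move=> x xA; apply/negP => xB; exact: (dis x).
have notA : forall x, x \in B -> (x \in A) = false.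
  by move=> x xB; apply/negP => xA; exact: (dis x).
split.
- set s := Num.min _ _.
  have s1 : 1 / (npos Y A * nneg Y B)%:R <= s.
    rewrite le_min !le_max; apply/andP; split; apply/orP.
    + by right; apply: inv_le1.
    + by left; apply: inv_le2.
  have s2 : 1 / (npos Y B * nneg Y A)%:R <= s.
    rewrite le_min !le_max; apply/andP; split; apply/orP.
    + by left; apply: inv_le2.
    + by right; apply: inv_le1.
  have s0 : 0 <= s by apply: le_trans s1; rewrite divr_ge0 ?ler0n.
  suff [o [co ho]] : exists o, cross_ordering A B pa pb o /\
      `|(fun o => xAUC Y o A B - xAUC Y o B A) o| <= s by exists o.
  apply: (@main_gen T A B pa pb (fun o => xAUC Y o A B - xAUC Y o B A) s
    dAB ra rb spa spb).
  + rewrite /= /xAUC.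
    have -> : [set p : T * T | [&& p.1 \in B, Y p.1, p.2 \in A, ~~ Y p.2
                               & above (pa ++ pb) p.1 p.2]] = set0.
      apply/setP => [[u v]]; rewrite !inE /=.
      case uB: (u \in B); case vA: (v \in A); rewrite ?andbF //=.
      have -> : above (pa ++ pb) u v = false.
        by apply: above_out; [rewrite ma | rewrite ma notA].
      by rewrite !andbF.
    by rewrite cards0 mul0r subr0 divr_ge0 ?ler0n.
  + rewrite /= /xAUC.
    have -> : [set p : T * T | [&& p.1 \in A, Y p.1, p.2 \in B, ~~ Y p.2
                               & above (pb ++ pa) p.1 p.2]] = set0.
      apply/setP => [[u v]]; rewrite !inE /=.
      case uA: (u \in A); case vB: (v \in B); rewrite ?andbF //=.
      have -> : above (pb ++ pa) u v = false.
        by apply: above_out; [rewrite mb | rewrite mb notB].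
      by rewrite !andbF.
    by rewrite cards0 mul0r sub0r oppr_le0 divr_ge0 ?ler0n.
  + move=> L R x y xA yB.
    have [h1 _] := @cnt_swap T (fun u => u \in A) Y (fun v => v \in B) (fun v => ~~ Y v) L R x y.
    have [_ h2] := @cnt_swap T (fun u => u \in B) Y (fun v => v \in A) (fun v => ~~ Y v) L R x y.
    move: h1 h2 => /=; rewrite xA yB (notB x xA) (notA y yB) /= !addn0 => h1 h2.
    rewrite /xAUC; apply: (@step_rat _ _ _ _ _ _ (Y x && ~~ Y y) (Y y && ~~ Y x)) => //.
    * by rewrite muln_gt0 hpa hnb.
    * by rewrite muln_gt0 hpb hna.
    * by case: (Y x); case: (Y y).
- set s := Num.min _ _.
  have s1 : 1 / (npos Y A * (nneg Y A + nneg Y B))%:R <= s.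
    rewrite le_min !le_max; apply/andP; split; apply/orP.
    + by left; apply: inv_le3.
    + by right; apply: inv_le1 => //; rewrite addn_gt0 hna.
  have s2 : 1 / (npos Y B * (nneg Y B + nneg Y A))%:R <= s.
    rewrite (addnC (nneg Y B)) le_min !le_max; apply/andP; split; apply/orP.
    + by right; apply: inv_le1 => //; rewrite addn_gt0 hna.
    + by left; apply: inv_le3.
  have s0 : 0 <= s by apply: le_trans s1; rewrite divr_ge0 ?ler0n.
  suff [o [co ho]] : exists o, cross_ordering A B pa pb o /\
      `|(fun o => PRF Y o A B - PRF Y o B A) o| <= s by exists o.
  apply: (@main_gen T A B pa pb (fun o => PRF Y o A B - PRF Y o B A) s
    dAB ra rb spa spb).
  + rewrite /= /PRF subr_ge0.
    apply: prf_end => //; first by rewrite addn_gt0 hna.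
    * rewrite /npos /nneg -cardsX; apply: subset_leq_card; apply/subsetP => [[u v]].
      rewrite !inE /= => /andP [/andP [uA Yu] /andP [vB Yv]].
      rewrite uA Yu vB Yv orbT /=; apply: above_in; [by rewrite ma | by rewrite ma notA].
    * rewrite /npos /nneg -cardsX; apply: subset_leq_card; apply/subsetP => [[u v]].
      rewrite !inE /= => /and5P [uB Yu vBA Yv ab].
      rewrite uB Yu Yv /= andbT.
      case vB: (v \in B) => //; move: vBA; rewrite vB /= => vA.
      have hab : above (pa ++ pb) u v = false by apply: above_out; [rewrite ma | rewrite ma notA].
      by rewrite hab in ab.
  + rewrite /= /PRF subr_le0.
    apply: prf_end => //; first by rewrite addn_gt0 hnb.
    * rewrite /npos /nneg -cardsX; apply: subset_leq_card; apply/subsetP => [[u v]].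
      rewrite !inE /= => /andP [/andP [uB Yu] /andP [vA Yv]].
      rewrite uB Yu vA Yv orbT /=; apply: above_in; [by rewrite mb | by rewrite mb notB].
    * rewrite /npos /nneg -cardsX; apply: subset_leq_card; apply/subsetP => [[u v]].
      rewrite !inE /= => /and5P [uA Yu vAB Yv ab].
      rewrite uA Yu Yv /= andbT.
      case vA: (v \in A) => //; move: vAB; rewrite vA /= => vB.
      have hab : above (pb ++ pa) u v = false by apply: above_out; [rewrite mb | rewrite mb notB].
      by rewrite hab in ab.
  + move=> L R x y xA yB.
    have [h1 _] := @cnt_swap T (fun u => u \in A) Y (fun v => v \in A :|: B) (fun v => ~~ Y v) L R x y.
    have [_ h2] := @cnt_swap T (fun u => u \in B) Y (fun v => v \in B :|: A) (fun v => ~~ Y v) L R x y.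
    move: h1 h2 => /=; rewrite !in_setU xA yB (notB x xA) (notA y yB) /= ?orbT ?addn0 ?add0n => h1 h2.
    rewrite /PRF; apply: (@step_rat _ _ _ _ _ _ (Y x && ~~ Y y) (Y y && ~~ Y x)) => //.
    * by rewrite muln_gt0 hpa addn_gt0 hna.
    * by rewrite muln_gt0 hpb addn_gt0 hnb.
    * by case: (Y x); case: (Y y).
Qed.
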